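(* Under the assumptions in the context, the operator $K$ defined by $K(t,f)=\bigl(\tfrac12\sum_{j=1}^{n-1}k_{n-j,j}(t)f_{n-j}f_j-\sum_{j=1}^\infty k_{n,j}(t)f_nf_j\bigr)_{n=1}^\infty$, $t\in[0,T)$, $f\in\ell^1_{\widetilde w}$, is a continuous mapping from $[0,T)\times\ell^1_{\widetilde w}$ to $\ell^1_w$. Moreover, $K$ is Lipschitz in the second argument on bounded sets, uniformly in the first argument on compact intervals: for every $t'\in[0,T)$ and $r>0$ there is $L$ with $\|K(t,f)-K(t,g)\|_w\le L\|f-g\|_{\widetilde w}$ for all $f,g$ with $\|f\|_{\widetilde w},\|g\|_{\widetilde w}\le r$ and $t\in[0,t']$.
   Context: Let $0<T\le\infty$, $a_n\ge0$, $b_{n,j}\ge0$ with $b_{n,j}=0$ for $j\le n$, $k_{n,j}:[0,T)\to[0,\infty)$ with $k_{n,j}(t)=k_{j,n}(t)$. For a positive sequence $v$, $\ell^1_v=\{f=(f_n)\subset\mathbb R:\|f\|_v=\sum v_n|f_n|<\infty\}$. The weight $w$ satisfies $w_n\ge n$, $(w_n)$ monotone increasing, and $\sum_{n=1}^{j-1}w_nb_{n,j}\le\kappa w_j$ for all $j\ge2$ with some $\kappa\in(0,1]$. Also $\alpha\in[0,1)$ with either (CI) $\alpha=0$, or (CII) $\kappa<1$ and $\alpha\in(0,1)$; $\widetilde w_n=(1+a_n)^\alpha w_n$. Each $k_{n,j}$ is continuous on $[0,T)$, and for every $t'\in(0,T)$ there is $c(t')>0$ with $k_{n,j}(t)\le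 c(t')\widetilde w_n\widetilde w_j/w_{n+j}$ for all $n,j$ and $t\in[0,t']$. *)

(* Defs.v *)
From Stdlib Require Import Reals.
From Coquelicot Require Import Coquelicot.
Open Scope R_scope.

(* Sequences f = (f_n)_{n>=1} are represented as f : nat -> R; the value f 0
   is ignored everywhere (indices start at 1). *)

Definition in_l1 (v f : nat -> R) : Prop :=
  ex_series (fun m => v (S m) * Rabs (f (S m))).

Definition l1norm (v f : nat -> R) : R :=
  Series (fun m => v (S m) * Rabs (f (S m))).

Definition seq_sub (f g : nat -> R) : nat -> R := fun n => f n - g n.

Definition in_time (T : Rbar) (t : R) : Prop := 0 <= t /\ Rbar_lt t T.

Definition wtilde (alpha : R) (a w : nat -> R) (n : nat) : R :=
  Rpower (1 + a n) alpha * w n.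

Definition Kop (k : nat -> nat -> R -> R) (t : R) (f : nat -> R) (n : nat) : R :=
  / 2 * sum_n_m (fun j => k (n - j)%nat j t * f (n - j)%nat * f j) 1 (n - 1)
  - Series (fun m => k n (S m) t * f n * f (S m)).

(* Main.v *)
Require Import Defs.
From Stdlib Require Import Reals.
From Coquelicot Require Import Coquelicot.
From Stdlib Require Import Lra Lia.
Open Scope R_scope.

Lemma snm_plus (a b : nat -> R) n m :
  sum_n_m (fun j => a j + b j) n m = sum_n_m a n m + sum_n_m b n m.
Proof. apply (sum_n_m_plus a b). Qed.

Lemma snm_scal (c : R) (a : nat -> R) n m :
  sum_n_m (fun j => c * a j) n m = c * sum_n_m a n m.
Proof. apply (sum_n_m_scal_l c a). Qed.

Lemma snm_minus (a b : nat -> R) n m :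
  sum_n_m (fun j => a j - b j) n m = sum_n_m a n m - sum_n_m b n m.
Proof.
  assert (E : sum_n_m (fun j => a j - b j) n m = sum_n_m (fun j => a j + (-1) * (b j)) n m).
  { apply sum_n_m_ext. intro j. simpl. lra. }
  rewrite E, snm_plus, snm_scal. simpl. lra.
Qed.

Lemma snm_le_loc (a b : nat -> R) n m :
  (forall k, (n <= k <= m)%nat -> a k <= b k) -> sum_n_m a n m <= sum_n_m b n m.
Proof.
  intro H.
  rewrite (sum_n_m_ext_loc a (fun k => if andb (Nat.leb n k) (Nat.leb k m) then a k else 0)).
  rewrite (sum_n_m_ext_loc b (fun k => if andb (Nat.leb n k) (Nat.leb k m) then b k else 0)).
  - apply sum_n_m_le. intro k. destruct (Nat.leb n k) eqn:E1; destruct (Nat.leb k m) eqn:E2; simpl; try lra.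
    apply H. apply Nat.leb_le in E1, E2. lia.
  - intros k Hk. replace (andb (Nat.leb n k) (Nat.leb k m)) with true; auto.
    symmetry. apply andb_true_intro; split; apply Nat.leb_le; lia.
  - intros k Hk. replace (andb (Nat.leb n k) (Nat.leb k m)) with true; auto.
    symmetry. apply andb_true_intro; split; apply Nat.leb_le; lia.
Qed.

Lemma snm_nonneg (a : nat -> R) n m :
  (forall k, (n <= k <= m)%nat -> 0 <= a k) -> 0 <= sum_n_m a n m.
Proof.
  intro H. apply Rle_trans with (sum_n_m (fun _ => 0) n m).
  - right. symmetry. apply (sum_n_m_const_zero (G:=R_AbelianMonoid)).
  - apply snm_le_loc. auto.
Qed.

Lemma snm_abs (a : nat -> R) n m :
  Rabs (sum_n_m a n m) <= sum_n_m (fun j => Rabs (a j)) n m.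
Proof. apply (norm_sum_n_m (K:=R_AbsRing) (V:=R_NormedModule) a n m). Qed.

Lemma sum_n_le_Series (a : nat -> R) N :
  (forall n, 0 <= a n) -> ex_series a -> sum_n a N <= Series a.
Proof.
  intros H Ha. apply (is_lim_seq_incr_compare (sum_n a)).
  - apply (Series_correct a Ha).
  - intro n. rewrite sum_Sn. unfold plus; simpl. specialize (H (S n)). lra.
Qed.

Lemma Series_nonneg (a : nat -> R) :
  (forall n, 0 <= a n) -> ex_series a -> 0 <= Series a.
Proof.
  intros H Ha. apply Rle_trans with (sum_n a 0). rewrite sum_O. auto.
  apply sum_n_le_Series; auto.
Qed.

Lemma series_bounded (a : nat -> R) B :
  (forall n, 0 <= a n) -> (forall N, sum_n a N <= B) -> ex_series a /\ Series a <= B.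
Proof.
  intros H HB.
  destruct (ex_finite_lim_seq_incr (sum_n a) B) as [l Hl].
  - intro n. rewrite sum_Sn. unfold plus; simpl. specialize (H (S n)). lra.
  - auto.
  - assert (Hs : is_series a l) by exact Hl.
    split. exists l; auto.
    rewrite (is_series_unique a l Hs).
    assert (Rbar_le l B). { apply (is_lim_seq_le (sum_n a) (fun _ => B) l B); auto. apply is_lim_seq_const. }
    simpl in H0. auto.
Qed.

Lemma sn_plus (a b : nat -> R) N : sum_n (fun j => a j + b j) N = sum_n a N + sum_n b N.
Proof. unfold sum_n. apply snm_plus. Qed.
Lemma sn_scal (c : R) (a : nat -> R) N : sum_n (fun j => c * a j) N = c * sum_n a N.
Proof. unfold sum_n. apply snm_scal. Qed.
Lemma sn_le (a b : nat -> R) N : (forall k, a k <= b k) -> sum_n a N <= sum_n b N.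
Proof. intro H. unfold sum_n. apply snm_le_loc. auto. Qed.
Lemma sn_nonneg (a : nat -> R) N : (forall k, 0 <= a k) -> 0 <= sum_n a N.
Proof. intro H. unfold sum_n. apply snm_nonneg. auto. Qed.

Definition conv (P : nat -> nat -> R) (n : nat) : R :=
  sum_n_m (fun j => P (n - j)%nat j) 1 (n - 1).

Definition good (P : nat -> nat -> R) (B : R) : Prop :=
  (forall i j, (1 <= i)%nat -> (1 <= j)%nat -> 0 <= P i j) /\
  (forall n, (1 <= n)%nat -> ex_series (fun m => P n (S m))) /\
  (forall N, sum_n (fun m => / 2 * conv P (S m) + Series (fun j => P (S m) (S j))) N <= B).

Lemma conv_le (P Q : nat -> nat -> R) m :
  (forall i j, (1 <= i)%nat -> (1 <= j)%nat -> P i j <= Q i j) ->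
  conv P (S m) <= conv Q (S m).
Proof.
  intro H. unfold conv. apply snm_le_loc. intros k Hk. apply H; lia.
Qed.

Lemma conv_nonneg (P : nat -> nat -> R) m :
  (forall i j, (1 <= i)%nat -> (1 <= j)%nat -> 0 <= P i j) -> 0 <= conv P (S m).
Proof.
  intro H. unfold conv. apply snm_nonneg. intros k Hk. apply H; lia.
Qed.

Lemma good_le (P Q : nat -> nat -> R) B :
  (forall i j, (1 <= i)%nat -> (1 <= j)%nat -> 0 <= P i j <= Q i j) ->
  good Q B -> good P B.
Proof.
  intros H [HQ0 [HQr HQs]]. split; [|split].
  - intros i j Hi Hj. apply H; auto.
  - intros n Hn. apply (ex_series_le (K:=R_AbsRing) (V:=R_CompleteNormedModule) _ (fun m => Q n (S m))); auto.
    intro m. change (Rabs (P n (S m)) <= Q n (S m)). destruct (H n (S m)) as [H1 H2]; try lia.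
    rewrite Rabs_right; lra.
  - intro N. eapply Rle_trans; [|apply (HQs N)]. apply sn_le. intro m.
    apply Rplus_le_compat.
    + apply Rmult_le_compat_l; [lra|]. apply conv_le. intros; apply H; auto.
    + apply Series_le; [|apply HQr; lia]. intro j. apply H; lia.
Qed.

Lemma good_add (P Q : nat -> nat -> R) B1 B2 :
  good P B1 -> good Q B2 -> good (fun i j => P i j + Q i j) (B1 + B2).
Proof.
  intros [HP0 [HPr HPs]] [HQ0 [HQr HQs]]. split; [|split].
  - intros i j Hi Hj. specialize (HP0 i j Hi Hj). specialize (HQ0 i j Hi Hj). lra.
  - intros n Hn. apply (ex_series_plus (K:=R_AbsRing) (V:=R_NormedModule)); auto.
  - intro N. eapply Rle_trans; [|apply Rplus_le_compat; [apply (HPs N)|apply (HQs N)]].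
    rewrite <- sn_plus. right. apply sum_n_ext. intro m.
    unfold conv. rewrite snm_plus. rewrite Series_plus; try (apply HPr || apply HQr); try lia.
    simpl. ring.
Qed.

Lemma conv_prod_SS (c : R) (x y : nat -> R) m :
  conv (fun i j => c * x i * y j) (S (S m)) =
  c * sum_f_R0 (fun k => y (S k) * x (S (m - k))) m.
Proof.
  unfold conv. replace (S (S m) - 1)%nat with (S m) by lia.
  rewrite <- sum_n_m_S.
  rewrite (sum_n_m_ext_loc _ (fun k => c * (y (S k) * x (S (m - k))))).
  - rewrite snm_scal. f_equal. rewrite <- sum_n_Reals. reflexivity.
  - intros k Hk. replace (S (S m) - S k)%nat with (S (m - k)) by lia. simpl. ring.
Qed.

Lemma good_prod (c : R) (x y : nat -> R) :
  0 <= c -> (forall i, 0 <= x (S i)) -> (forall i, 0 <= y (S i)) ->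
  ex_series (fun i => x (S i)) -> ex_series (fun i => y (S i)) ->
  good (fun i j => c * x i * y j)
       (3 / 2 * c * Series (fun i => x (S i)) * Series (fun i => y (S i))).
Proof.
  intros Hc Hx Hy Ex Ey.
  set (Sx := Series (fun i => x (S i))). set (Sy := Series (fun i => y (S i))).
  assert (HSx : 0 <= Sx) by (apply Series_nonneg; auto).
  assert (HSy : 0 <= Sy) by (apply Series_nonneg; auto).
  assert (Hx' : forall i, (1 <= i)%nat -> 0 <= x i).
  { intros i Hi. destruct i; [lia|]. auto. }
  assert (Hy' : forall i, (1 <= i)%nat -> 0 <= y i).
  { intros i Hi. destruct i; [lia|]. auto. }
  assert (H0 : forall i j, (1 <= i)%nat -> (1 <= j)%nat -> 0 <= c * x i * y j).
  { intros. apply Rmult_le_pos; [apply Rmult_le_pos|]; auto. }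
  split; [exact H0|split].
  - intros n Hn. apply (ex_series_scal_l (K:=R_AbsRing) (V:=R_NormedModule) (c * x n)) in Ey.
    exact Ey.
  - intro N.
    set (cc := fun m => sum_f_R0 (fun k => y (S k) * x (S (m - k))) m).
    assert (Hcc : is_series cc (Sy * Sx)).
    { unfold cc. apply (is_series_mult (fun k => y (S k)) (fun k => x (S k))); try (apply Series_correct; auto).
      - apply (ex_series_ext (K:=R_AbsRing) (V:=R_NormedModule) (fun i => y (S i))); auto.
        intro n. rewrite Rabs_right; auto. apply Rle_ge; auto.
      - apply (ex_series_ext (K:=R_AbsRing) (V:=R_NormedModule) (fun i => x (S i))); auto.
        intro n. rewrite Rabs_right; auto. apply Rle_ge; auto. }
    assert (Hcc0 : forall m, 0 <= cc m).
    { intro m. unfold cc. rewrite <- sum_n_Reals. apply sn_nonneg. intro k.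
      apply Rmult_le_pos; auto. }
    assert (Hconv : forall N, sum_n (fun m => conv (fun i j => c * x i * y j) (S m)) (S N)
                             = c * sum_n cc N).
    { induction N0.
      - rewrite sum_Sn, !sum_O. unfold conv at 1. simpl. rewrite sum_n_m_zero by lia.
        rewrite conv_prod_SS. unfold cc. simpl. unfold zero, plus; simpl. ring.
      - rewrite sum_Sn, IHN0, sum_Sn. rewrite conv_prod_SS. unfold cc. simpl. unfold plus; simpl. ring. }
    assert (Hc1 : sum_n (fun m => conv (fun i j => c * x i * y j) (S m)) N <= c * (Sy * Sx)).
    { apply Rle_trans with (sum_n (fun m => conv (fun i j => c * x i * y j) (S m)) (S N)).
      - rewrite sum_Sn. unfold plus; simpl.
        assert (0 <= conv (fun i j => c * x i * y j) (S (S N))) by (apply conv_nonneg; auto). lra.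
      - rewrite Hconv. apply Rmult_le_compat_l; auto.
        rewrite <- (is_series_unique cc _ Hcc). apply sum_n_le_Series; auto. exists (Sy * Sx); auto. }
    assert (Hrow : forall m, Series (fun j => c * x (S m) * y (S j)) = c * Sy * x (S m)).
    { intro m. rewrite Series_scal_l. unfold Sy. ring. }
    rewrite (sum_n_ext _ (fun m => / 2 * conv (fun i j => c * x i * y j) (S m) + (c * Sy) * x (S m))).
    2:{ intro m. rewrite Hrow. reflexivity. }
    rewrite sn_plus, sn_scal, sn_scal.
    assert (sum_n (fun m => x (S m)) N <= Sx) by (apply sum_n_le_Series; auto).
    assert (0 <= c * Sy) by (apply Rmult_le_pos; auto).
    assert ((c * Sy) * sum_n (fun m => x (S m)) N <= (c * Sy) * Sx) by (apply Rmult_le_compat_l; auto).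
    lra.
Qed.

Definition Op (A : nat -> nat -> R) (n : nat) : R :=
  / 2 * sum_n_m (fun j => A (n - j)%nat j) 1 (n - 1) - Series (fun m => A n (S m)).

Lemma Rabs_minus_le (x y : R) : Rabs (x - y) <= Rabs x + Rabs y.
Proof. unfold Rminus. eapply Rle_trans; [apply Rabs_triang|]. rewrite Rabs_Ropp. lra. Qed.

Lemma op_bound (w : nat -> R) (A : nat -> nat -> R) B :
  (forall n, (1 <= n)%nat -> 1 <= w n) ->
  (forall n m, (1 <= n)%nat -> (n <= m)%nat -> w n <= w m) ->
  good (fun i j => w (i + j)%nat * Rabs (A i j)) B ->
  (forall n, (1 <= n)%nat -> ex_series (fun m => A n (S m))) /\
  ex_series (fun m => w (S m) * Rabs (Op A (S m))) /\
  Series (fun m => w (S m) * Rabs (Op A (S m))) <= B.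
Proof.
  intros Hw1 Hwm [HP0 [HPr HPs]].
  assert (Habs : forall n, (1 <= n)%nat -> ex_series (fun m => Rabs (A n (S m)))).
  { intros n Hn. apply (ex_series_le (K:=R_AbsRing) (V:=R_CompleteNormedModule) _ (fun m => w (n + S m)%nat * Rabs (A n (S m)))); [|apply HPr; auto].
    intro m. change (Rabs (Rabs (A n (S m))) <= w (n + S m)%nat * Rabs (A n (S m))).
    rewrite Rabs_Rabsolu. assert (1 <= w (n + S m)%nat) by (apply Hw1; lia).
    assert (0 <= Rabs (A n (S m))) by apply Rabs_pos. nra. }
  assert (Hrow : forall n, (1 <= n)%nat -> ex_series (fun m => A n (S m))).
  { intros n Hn. apply ex_series_Rabs. auto. }
  split; [exact Hrow|].
  assert (Hpt : forall m, 0 <= w (S m) * Rabs (Op A (S m)) <=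
     / 2 * conv (fun i j => w (i + j)%nat * Rabs (A i j)) (S m) +
     Series (fun j => w (S m + S j)%nat * Rabs (A (S m) (S j)))).
  { intro m. assert (Hw : 1 <= w (S m)) by (apply Hw1; lia). split.
    { apply Rmult_le_pos; [lra|apply Rabs_pos]. }
    unfold Op.
    eapply Rle_trans.
    { apply Rmult_le_compat_l; [lra|]. apply Rabs_minus_le. }
    rewrite Rabs_mult, (Rabs_right (/2)) by lra.
    eapply Rle_trans.
    { apply Rmult_le_compat_l; [lra|]. apply Rplus_le_compat.
      - apply Rmult_le_compat_l; [lra|]. apply snm_abs.
      - apply Series_Rabs. apply Habs; lia. }
    rewrite Rmult_plus_distr_l. apply Rplus_le_compat.
    - right. unfold conv. rewrite <- Rmult_assoc, (Rmult_comm (w (S m)) (/2)), Rmult_assoc. apply Rmult_eq_compat_l. rewrite <- snm_scal.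
      apply sum_n_m_ext_loc. intros k Hk. replace (S m - k + k)%nat with (S m) by lia. reflexivity.
    - rewrite <- Series_scal_l. apply Series_le; [|apply HPr; lia].
      intro j. split. apply Rmult_le_pos; [lra|apply Rabs_pos].
      apply Rmult_le_compat_r; [apply Rabs_pos|]. apply Hwm; lia. }
  apply series_bounded.
  - intro m. apply Hpt.
  - intro N. eapply Rle_trans; [|apply (HPs N)]. apply sn_le. intro m. apply Hpt.
Qed.

Lemma Op_minus (A1 A2 : nat -> nat -> R) n :
  ex_series (fun m => A1 n (S m)) -> ex_series (fun m => A2 n (S m)) ->
  Op (fun i j => A1 i j - A2 i j) n = Op A1 n - Op A2 n.
Proof.
  intros E1 E2. unfold Op. rewrite snm_minus.
  rewrite (Series_minus (fun m => A1 n (S m)) (fun m => A2 n (S m))) by auto. simpl. ring.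
Qed.

Lemma fin_delta (Q : nat -> R -> Prop) :
  (forall n d d', 0 < d' <= d -> Q n d -> Q n d') ->
  (forall n, exists d, 0 < d /\ Q n d) ->
  forall N, exists d, 0 < d /\ forall n, (n <= N)%nat -> Q n d.
Proof.
  intros Hm Hd N. induction N as [|N IH].
  - destruct (Hd 0%nat) as [d [Hd0 HQ]]. exists d. split; auto.
    intros n Hn. replace n with 0%nat by lia. auto.
  - destruct IH as [d1 [Hd1 HQ1]]. destruct (Hd (S N)) as [d2 [Hd2 HQ2]].
    exists (Rmin d1 d2). split. apply Rmin_pos; auto.
    intros n Hn. destruct (Nat.eq_dec n (S N)) as [->|Hne].
    + apply (Hm _ d2); auto. split. apply Rmin_pos; auto. apply Rmin_r.
    + apply (Hm _ d1); auto. split. apply Rmin_pos; auto. apply Rmin_l. apply HQ1. lia.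
Qed.

Lemma exists_later (T : Rbar) (t : R) : Rbar_lt t T -> exists t2, t < t2 /\ Rbar_lt t2 T.
Proof.
  destruct T as [T| |]; intro H; simpl in H.
  - exists ((t + T) / 2). split; [lra|simpl; lra].
  - exists (t + 1). split; [lra|exact I].
  - contradiction.
Qed.

Lemma in_time_of (T : Rbar) (s t2 : R) : 0 <= s <= t2 -> Rbar_lt t2 T -> in_time T s.
Proof.
  intros Hs H. split; [lra|]. destruct T as [T| |]; simpl in *; auto; lra.
Qed.

Definition xN (N : nat) (x : nat -> R) (i : nat) : R := if Nat.leb i N then 0 else x i.

Lemma tail_small (x : nat -> R) :
  (forall i, 0 <= x (S i)) -> ex_series (fun i => x (S i)) ->
  forall tau, 0 < tau -> exists N,
    ex_series (fun i => xN N x (S i)) /\ Series (fun i => xN N x (S i)) <= tau.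
Proof.
  intros Hx Ex tau Htau.
  assert (HN : forall N i, 0 <= xN N x (S i) <= x (S i)).
  { intros N i. unfold xN. destruct (Nat.leb (S i) N); split; auto; lra. }
  assert (EN : forall N, ex_series (fun i => xN N x (S i))).
  { intro N. apply (ex_series_le (K:=R_AbsRing) (V:=R_CompleteNormedModule) _ (fun i => x (S i))); auto.
    intro i. change (Rabs (xN N x (S i)) <= x (S i)). rewrite Rabs_right. apply HN. apply Rle_ge, HN. }
  pose proof (Series_correct _ Ex) as Hc.
  assert (Hl : is_lim_seq (sum_n (fun i => x (S i))) (Series (fun i => x (S i)))) by exact Hc.
  apply is_lim_seq_spec in Hl. destruct (Hl (mkposreal tau Htau)) as [M HM]. simpl in HM.
  exists (S M). split; auto.
  rewrite (Series_incr_n _ (S M)) by (auto; lia).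
  rewrite (Series_incr_n (fun i => x (S i)) (S M)) in HM by (auto; lia).
  specialize (HM M (le_n M)).
  simpl Init.Nat.pred in *.
  assert (Z : sum_f_R0 (fun i => xN (S M) x (S i)) M = 0).
  { rewrite <- sum_n_Reals. unfold sum_n. rewrite (sum_n_m_ext_loc _ (fun _ => zero)).
    apply (sum_n_m_const_zero (G:=R_AbelianMonoid)).
    intros k Hk. unfold xN. replace (Nat.leb (S k) (S M)) with true. reflexivity.
    symmetry. apply Nat.leb_le. lia. }
  rewrite Z. rewrite (Series_ext _ (fun k => x (S (S M + k)))).
  2:{ intro n. unfold xN. replace (Nat.leb (S (S M + n)) (S M)) with false. reflexivity.
      symmetry. apply Nat.leb_gt. lia. }
  rewrite sum_n_Reals in HM.
  apply Rabs_def2 in HM. lra.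
Qed.

Lemma pw1 W K C u v : 0 <= K -> 0 <= W -> W * K <= C ->
  W * Rabs (K * u * v) <= C * (Rabs u * Rabs v).
Proof.
  intros HK HW HC. rewrite !Rabs_mult, (Rabs_right K) by lra.
  assert (0 <= Rabs u * Rabs v) by (apply Rmult_le_pos; apply Rabs_pos).
  replace (W * (K * Rabs u * Rabs v)) with ((W * K) * (Rabs u * Rabs v)) by ring.
  apply Rmult_le_compat_r; auto.
Qed.

Lemma pw2 W K C f1 f2 g1 g2 : 0 <= K -> 0 <= W -> W * K <= C ->
  W * Rabs (K * f1 * f2 - K * g1 * g2) <= C * (Rabs f1 * Rabs (f2 - g2) + Rabs (f1 - g1) * Rabs g2).
Proof.
  intros HK HW HC.
  replace (K * f1 * f2 - K * g1 * g2) with (K * (f1 * (f2 - g2) + (f1 - g1) * g2)) by ring.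
  rewrite Rabs_mult, (Rabs_right K) by lra.
  assert (H1 : Rabs (f1 * (f2 - g2) + (f1 - g1) * g2) <= Rabs f1 * Rabs (f2 - g2) + Rabs (f1 - g1) * Rabs g2).
  { rewrite <- !Rabs_mult. apply Rabs_triang. }
  assert (0 <= Rabs (f1 * (f2 - g2) + (f1 - g1) * g2)) by apply Rabs_pos.
  replace (W * (K * Rabs (f1 * (f2 - g2) + (f1 - g1) * g2))) with ((W * K) * Rabs (f1 * (f2 - g2) + (f1 - g1) * g2)) by ring.
  apply Rle_trans with (C * Rabs (f1 * (f2 - g2) + (f1 - g1) * g2)).
  apply Rmult_le_compat_r; auto.
  apply Rmult_le_compat_l; auto. apply Rle_trans with (W * K); auto. apply Rmult_le_pos; auto.
Qed.

Lemma pw3 W Ks Kt Cs f1 f2 g1 g2 : 0 <= Ks -> 0 <= W -> W * Ks <= Cs ->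
  W * Rabs (Ks * g1 * g2 - Kt * f1 * f2) <=
  Cs * (Rabs f1 * Rabs (g2 - f2) + Rabs (g1 - f1) * Rabs (g2 - f2) + Rabs (g1 - f1) * Rabs f2)
  + W * Rabs (Ks - Kt) * (Rabs f1 * Rabs f2).
Proof.
  intros HK HW HC.
  replace (Ks * g1 * g2 - Kt * f1 * f2) with
    (Ks * (f1 * (g2 - f2) + (g1 - f1) * (g2 - f2) + (g1 - f1) * f2) + (Ks - Kt) * f1 * f2) by ring.
  eapply Rle_trans. apply Rmult_le_compat_l; [auto|apply Rabs_triang].
  rewrite Rmult_plus_distr_l. apply Rplus_le_compat.
  - rewrite Rabs_mult, (Rabs_right Ks) by lra.
    assert (H1 : Rabs (f1 * (g2 - f2) + (g1 - f1) * (g2 - f2) + (g1 - f1) * f2) <=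
       Rabs f1 * Rabs (g2 - f2) + Rabs (g1 - f1) * Rabs (g2 - f2) + Rabs (g1 - f1) * Rabs f2).
    { rewrite <- !Rabs_mult. eapply Rle_trans; [apply Rabs_triang|].
      apply Rplus_le_compat_r. apply Rabs_triang. }
    set (Z := Rabs (f1 * (g2 - f2) + (g1 - f1) * (g2 - f2) + (g1 - f1) * f2)) in *.
    assert (0 <= Z) by apply Rabs_pos.
    replace (W * (Ks * Z)) with ((W * Ks) * Z) by ring.
    apply Rle_trans with (Cs * Z). apply Rmult_le_compat_r; auto.
    apply Rmult_le_compat_l; auto. apply Rle_trans with (W * Ks); auto. apply Rmult_le_pos; auto.
  - rewrite !Rabs_mult. right. ring.
Qed.

Theorem proposition4p3
  (T : Rbar) (a : nat -> R) (b : nat -> nat -> R) (k : nat -> nat -> R -> R)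
  (w : nat -> R) (kappa alpha : R)
  (HT : Rbar_lt 0 T)
  (Ha : forall n, (1 <= n)%nat -> 0 <= a n)
  (Hb : forall n j, (1 <= n)%nat -> (1 <= j)%nat -> 0 <= b n j)
  (Hb0 : forall n j, (1 <= n)%nat -> (1 <= j)%nat -> (j <= n)%nat -> b n j = 0)
  (Hksym : forall n j t, (1 <= n)%nat -> (1 <= j)%nat -> in_time T t ->
             k n j t = k j n t)
  (Hkpos : forall n j t, (1 <= n)%nat -> (1 <= j)%nat -> in_time T t ->
             0 <= k n j t)
  (Hwn : forall n, (1 <= n)%nat -> INR n <= w n)
  (Hwmono : forall n m, (1 <= n)%nat -> (n <= m)%nat -> w n <= w m)
  (Hkappa : 0 < kappa <= 1)
  (Hwb : forall j, (2 <= j)%nat ->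
           sum_n_m (fun n => w n * b n j) 1 (j - 1) <= kappa * w j)
  (Halpha : 0 <= alpha < 1)
  (Hcase : alpha = 0 \/ (kappa < 1 /\ 0 < alpha < 1))
  (Hkcont : forall n j, (1 <= n)%nat -> (1 <= j)%nat ->
     forall t, in_time T t -> forall eps, 0 < eps -> exists delta, 0 < delta /\
       forall s, in_time T s -> Rabs (s - t) < delta ->
         Rabs (k n j s - k n j t) < eps)
  (Hkbound : forall t', 0 < t' -> Rbar_lt t' T -> exists c, 0 < c /\
     forall n j t, (1 <= n)%nat -> (1 <= j)%nat -> 0 <= t <= t' ->
       k n j t <= c * wtilde alpha a w n * wtilde alpha a w j / w (n + j)%nat) :
  let wt := wtilde alpha a w in
  (forall t f, in_time T t -> in_l1 wt f ->
     (forall n, (1 <= n)%nat -> ex_series (fun m => k n (S m) t * f n * f (S m)))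
     /\ in_l1 w (Kop k t f))
  /\
  (forall t f, in_time T t -> in_l1 wt f ->
     forall eps, 0 < eps -> exists delta, 0 < delta /\
       forall s g, in_time T s -> in_l1 wt g ->
         Rabs (s - t) < delta -> l1norm wt (seq_sub g f) < delta ->
         l1norm w (seq_sub (Kop k s g) (Kop k t f)) < eps)
  /\
  (forall t', in_time T t' -> forall r, 0 < r -> exists L,
     forall f g t, in_l1 wt f -> in_l1 wt g ->
       l1norm wt f <= r -> l1norm wt g <= r -> 0 <= t <= t' ->
       l1norm w (seq_sub (Kop k t f) (Kop k t g)) <= L * l1norm wt (seq_sub f g)).
Proof.
  intro wt.
  assert (Hw1 : forall n, (1 <= n)%nat -> 1 <= w n).
  { intros n Hn. apply Rle_trans with (INR n); auto. apply (le_INR 1 n) in Hn. simpl in Hn. lra. }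
  assert (Hwt : forall n, (1 <= n)%nat -> w n <= wt n).
  { intros n Hn. unfold wt, wtilde. specialize (Ha n Hn). specialize (Hw1 n Hn).
    assert (1 <= Rpower (1 + a n) alpha).
    { rewrite <- (Rpower_O (1 + a n)) at 1 by lra. apply Rle_Rpower; lra. }
    nra. }
  assert (Hwt1 : forall n, (1 <= n)%nat -> 1 <= wt n).
  { intros n Hn. specialize (Hw1 n Hn). specialize (Hwt n Hn). lra. }
  assert (Hlater : forall t, in_time T t -> exists t2 c, t < t2 /\ Rbar_lt t2 T /\ 0 < c /\
     forall i j s, (1 <= i)%nat -> (1 <= j)%nat -> 0 <= s <= t2 ->
       0 <= k i j s /\ w (i + j)%nat * k i j s <= c * wt i * wt j).
  { intros t [Ht0 HtT]. destruct (exists_later T t HtT) as [t2 [Ht2 Ht2T]].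
    destruct (Hkbound t2) as [c [Hc Hcb]]; [lra|auto|].
    exists t2, c. split; [auto|split; [auto|split; [auto|]]].
    intros i j s Hi Hj Hs. split.
    - apply Hkpos; auto. apply (in_time_of T s t2); auto.
    - specialize (Hcb i j s Hi Hj Hs). assert (1 <= w (i + j)%nat) by (apply Hw1; lia).
      apply Rmult_le_compat_l with (r := w (i + j)%nat) in Hcb; [|lra].
      eapply Rle_trans; [exact Hcb|]. right. fold wt. field. lra. }
  assert (Hx0 : forall f i, 0 <= wt (S i) * Rabs (f (S i))).
  { intros f i. assert (1 <= wt (S i)) by (apply Hwt1; lia). apply Rmult_le_pos; [lra|apply Rabs_pos]. }
  assert (P1 : forall t f, in_time T t -> in_l1 wt f ->
     (forall n, (1 <= n)%nat -> ex_series (fun m => k n (S m) t * f n * f (S m)))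
     /\ in_l1 w (Kop k t f)).
  { intros t f Ht Hf. destruct (Hlater t Ht) as [t2 [c [Ht2 [Ht2T [Hc Hkb]]]]].
    set (x := fun i => wt i * Rabs (f i)).
    assert (Hg : good (fun i j => w (i + j)%nat * Rabs (k i j t * f i * f j))
               (3 / 2 * c * Series (fun i => x (S i)) * Series (fun i => x (S i)))).
    { apply good_le with (Q := fun i j => c * x i * x j).
      2:{ apply good_prod; [lra|intro i; apply Hx0|intro i; apply Hx0|exact Hf|exact Hf]. }
      intros i j Hi Hj. destruct Ht as [Ht0 _].
      destruct (Hkb i j t Hi Hj) as [Hk0 Hk1]; [lra|]. split.
      - apply Rmult_le_pos; [specialize (Hw1 (i + j)%nat); lia || (assert (1 <= w (i+j)%nat) by (apply Hw1; lia); lra)|apply Rabs_pos].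
      - eapply Rle_trans. apply (pw1 _ _ (c * wt i * wt j)); auto.
        assert (1 <= w (i+j)%nat) by (apply Hw1; lia); lra.
        right. unfold x. ring. }
    destruct (op_bound w _ _ Hw1 Hwmono Hg) as [Hr [Hex _]].
    split; [intros n Hn; apply (Hr n Hn)|exact Hex]. }
  split; [exact P1|split].
  - intros t f Ht Hf eps Heps.
    destruct (Hlater t Ht) as [t2 [c [Ht2 [Ht2T [Hc Hkb]]]]].
    set (x := fun i => wt i * Rabs (f i)).
    set (F := Series (fun i => x (S i))).
    assert (HF : 0 <= F) by (apply Series_nonneg; [intro i; apply Hx0|exact Hf]).
    set (tau := eps / (24 * c * (F + 1))).
    assert (Htau : 0 < tau).
    { unfold tau. apply Rdiv_lt_0_compat; [lra|]. apply Rmult_lt_0_compat; lra. }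
    destruct (tail_small x (fun i => Hx0 f i) Hf tau Htau) as [N0 [ExN HxN]].
    set (W := w (S (N0 + N0))).
    assert (HW : 1 <= W) by (apply Hw1; lia).
    set (eta := eps / (6 * (F * F + 1))).
    assert (Heta : 0 < eta).
    { unfold eta. apply Rdiv_lt_0_compat; [lra|]. nra. }
    assert (HeW : 0 < eta / W) by (apply Rdiv_lt_0_compat; lra).
    assert (Hfd : exists dk, 0 < dk /\ forall i j, (1 <= i)%nat -> (i <= N0)%nat ->
        (1 <= j)%nat -> (j <= N0)%nat -> forall s, in_time T s -> Rabs (s - t) < dk ->
        Rabs (k i j s - k i j t) < eta / W).
    { set (Qi := fun i d => forall j, (1 <= i)%nat -> (1 <= j)%nat -> (j <= N0)%nat ->
          forall s, in_time T s -> Rabs (s - t) < d -> Rabs (k i j s - k i j t) < eta / W).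
      assert (Mi : forall n d d', 0 < d' <= d -> Qi n d -> Qi n d').
      { intros n d d' Hdd HQ j H1 H2 H3 s' Hs' Hst'. apply HQ; auto. lra. }
      assert (Ei : forall i, exists d, 0 < d /\ Qi i d).
      { intro i. destruct (Nat.le_gt_cases 1 i) as [Hi|Hi].
        - set (Qj := fun j d => (1 <= j)%nat ->
              forall s, in_time T s -> Rabs (s - t) < d -> Rabs (k i j s - k i j t) < eta / W).
          assert (Mj : forall n d d', 0 < d' <= d -> Qj n d -> Qj n d').
          { intros n d d' Hdd HQ H1 s' Hs' Hst'. apply HQ; auto. lra. }
          assert (Ej : forall j, exists d, 0 < d /\ Qj j d).
          { intro j. destruct (Nat.le_gt_cases 1 j) as [Hj|Hj].
            - destruct (Hkcont i j Hi Hj t Ht (eta / W) HeW) as [d [Hd HH]].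
              exists d. split; auto. unfold Qj. intros _. exact HH.
            - exists 1. split; [lra|]. unfold Qj. intros; lia. }
          destruct (fin_delta Qj Mj Ej N0) as [d [Hd HQ]].
          exists d. split; auto. intros j _ Hj Hj' s' Hs' Hst'. apply (HQ j Hj' Hj s' Hs' Hst').
        - exists 1. split; [lra|]. unfold Qi. intros; lia. }
      destruct (fin_delta Qi Mi Ei N0) as [d [Hd HQ]].
      exists d. split; auto. intros i j Hi Hi' Hj Hj' s' Hs' Hst'. apply (HQ i Hi' j Hi Hj Hj' s' Hs' Hst'). }
    destruct Hfd as [dk [Hdk Hkc]].
    set (dd := eps / (6 * c * (2 * F + 1))).
    assert (Hdd : 0 < dd).
    { unfold dd. apply Rdiv_lt_0_compat; [lra|]. apply Rmult_lt_0_compat; lra. }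
    exists (Rmin (Rmin dk (t2 - t)) (Rmin 1 dd)).
    split. { apply Rmin_pos; apply Rmin_pos; lra. }
    intros s g Hs Hg Hst Hd.
    assert (Hm1 := Rmin_l (Rmin dk (t2 - t)) (Rmin 1 dd)).
    assert (Hm2 := Rmin_r (Rmin dk (t2 - t)) (Rmin 1 dd)).
    assert (Hm3 := Rmin_l dk (t2 - t)). assert (Hm4 := Rmin_r dk (t2 - t)).
    assert (Hm5 := Rmin_l 1 dd). assert (Hm6 := Rmin_r 1 dd).
    set (dl := Rmin (Rmin dk (t2 - t)) (Rmin 1 dd)) in *.
    assert (Hsdk : Rabs (s - t) < dk) by lra.
    assert (Hs2 : 0 <= s <= t2).
    { destruct Hs as [Hs0 _]. split; auto. assert (s - t <= Rabs (s - t)) by apply Rle_abs. lra. }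
    assert (Ht2' : 0 <= t <= t2) by (destruct Ht; lra).
    destruct (P1 s g Hs Hg) as [Rg _]. destruct (P1 t f Ht Hf) as [Rf _].
    set (y := fun i => wt i * Rabs (g i)).
    set (z := fun i => wt i * Rabs (g i - f i)).
    assert (Hz0 : forall i, 0 <= z (S i)).
    { intro i. unfold z. assert (1 <= wt (S i)) by (apply Hwt1; lia). apply Rmult_le_pos; [lra|apply Rabs_pos]. }
    assert (Ez : ex_series (fun i => z (S i))).
    { apply (ex_series_le (K:=R_AbsRing) (V:=R_CompleteNormedModule) _ (fun i => y (S i) + x (S i))).
      - intro i. change (Rabs (z (S i)) <= y (S i) + x (S i)). rewrite Rabs_right by (apply Rle_ge, Hz0).
        unfold x, y, z. rewrite <- Rmult_plus_distr_l. apply Rmult_le_compat_l.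
        assert (1 <= wt (S i)) by (apply Hwt1; lia). lra. apply Rabs_minus_le.
      - apply (ex_series_plus (K:=R_AbsRing) (V:=R_NormedModule)); [exact Hg|exact Hf]. }
    set (xn := xN N0 x).
    assert (Hxn : forall i, 0 <= xn (S i) <= x (S i)).
    { intro i. unfold xn, xN. destruct (Nat.leb (S i) N0); split; try lra; apply Hx0. }
    set (A := fun i j => k i j s * g i * g j - k i j t * f i * f j).
    assert (Hg' : good (fun i j => w (i + j)%nat * Rabs (A i j))
       (3 / 2 * c * Series (fun i => x (S i)) * Series (fun i => z (S i)) +
       (3 / 2 * c * Series (fun i => z (S i)) * Series (fun i => z (S i)) +
       (3 / 2 * c * Series (fun i => z (S i)) * Series (fun i => x (S i)) +
       (3 / 2 * eta * Series (fun i => x (S i)) * Series (fun i => x (S i)) +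
       (3 / 2 * (2 * c) * Series (fun i => xn (S i)) * Series (fun i => x (S i)) +
        3 / 2 * (2 * c) * Series (fun i => x (S i)) * Series (fun i => xn (S i)))))))).
    { apply good_le with (Q := fun i j => c * x i * z j + (c * z i * z j + (c * z i * x j +
         (eta * x i * x j + (2 * c * xn i * x j + 2 * c * x i * xn j))))).
      2:{ repeat apply good_add; apply good_prod; try lra; try (intro i; apply Hx0); try exact Hf;
          try exact Ez; try exact ExN; try (intro i; apply Hxn); auto. }
      intros i j Hi Hj.
      destruct (Hkb i j s Hi Hj Hs2) as [Hks0 Hks1].
      destruct (Hkb i j t Hi Hj Ht2') as [Hkt0 Hkt1].
      assert (HWij : 1 <= w (i+j)%nat) by (apply Hw1; lia).
      assert (Hwti : 1 <= wt i) by (apply Hwt1; lia).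
      assert (Hwtj : 1 <= wt j) by (apply Hwt1; lia).
      assert (Hxi : 0 <= x i) by (unfold x; apply Rmult_le_pos; [lra|apply Rabs_pos]).
      assert (Hxj : 0 <= x j) by (unfold x; apply Rmult_le_pos; [lra|apply Rabs_pos]).
      assert (Hxni : 0 <= xn i <= x i).
      { destruct i; [lia|]. apply Hxn. }
      assert (Hxnj : 0 <= xn j <= x j).
      { destruct j; [lia|]. apply Hxn. }
      assert (Hfi : Rabs (f i) <= x i).
      { unfold x. assert (0 <= Rabs (f i)) by apply Rabs_pos. nra. }
      assert (Hfj : Rabs (f j) <= x j).
      { unfold x. assert (0 <= Rabs (f j)) by apply Rabs_pos. nra. }
      assert (Hff : 0 <= Rabs (f i) * Rabs (f j)) by (apply Rmult_le_pos; apply Rabs_pos).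
      assert (Hbig : w (i + j)%nat * Rabs (k i j s - k i j t) <= 2 * c * wt i * wt j).
      { eapply Rle_trans. apply Rmult_le_compat_l; [lra|apply Rabs_minus_le].
        rewrite (Rabs_right (k i j s)) by lra. rewrite (Rabs_right (k i j t)) by lra. lra. }
      assert (H2big : (2 * c * wt i * wt j) * (Rabs (f i) * Rabs (f j)) = 2 * c * x i * x j).
      { unfold x. ring. }
      assert (Hp1 : 0 <= eta * x i * x j) by (apply Rmult_le_pos; [apply Rmult_le_pos|]; lra).
      assert (Hp2 : 0 <= 2 * c * xn i * x j) by (apply Rmult_le_pos; [apply Rmult_le_pos|]; lra).
      assert (Hp3 : 0 <= 2 * c * x i * xn j) by (apply Rmult_le_pos; [apply Rmult_le_pos|]; lra).
      assert (Hbig2 : w (i + j)%nat * Rabs (k i j s - k i j t) * (Rabs (f i) * Rabs (f j)) <= 2 * c * x i * x j).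
      { rewrite <- H2big. apply Rmult_le_compat_r; auto. }
      assert (Hdk2 : w (i + j)%nat * Rabs (k i j s - k i j t) * (Rabs (f i) * Rabs (f j)) <=
                     eta * x i * x j + 2 * c * xn i * x j + 2 * c * x i * xn j).
      { destruct (Nat.le_gt_cases i N0) as [HiN|HiN]; destruct (Nat.le_gt_cases j N0) as [HjN|HjN].
        - assert (Hd1 : Rabs (k i j s - k i j t) < eta / W) by (apply Hkc; auto).
          assert (HWW : w (i + j)%nat <= W) by (apply Hwmono; lia).
          assert (H1 : w (i + j)%nat * Rabs (k i j s - k i j t) <= eta).
          { apply Rle_trans with (W * (eta / W)).
            - apply Rmult_le_compat; try lra; apply Rabs_pos.
            - right. field. lra. }
          assert (H2 : Rabs (f i) * Rabs (f j) <= x i * x j).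
          { apply Rmult_le_compat; auto; apply Rabs_pos. }
          assert (0 <= w (i + j)%nat * Rabs (k i j s - k i j t)).
          { apply Rmult_le_pos; [lra|apply Rabs_pos]. }
          apply Rle_trans with (eta * (x i * x j)).
          + apply Rmult_le_compat; auto.
          + lra.
        - assert (Exj : xn j = x j).
          { unfold xn, xN. replace (Nat.leb j N0) with false; auto. symmetry. apply Nat.leb_gt. lia. }
          rewrite Exj in *. lra.
        - assert (Exi : xn i = x i).
          { unfold xn, xN. replace (Nat.leb i N0) with false; auto. symmetry. apply Nat.leb_gt. lia. }
          rewrite Exi in *. lra.
        - assert (Exi : xn i = x i).
          { unfold xn, xN. replace (Nat.leb i N0) with false; auto. symmetry. apply Nat.leb_gt. lia. }
          rewrite Exi in *. lra. }
      split.
      - apply Rmult_le_pos; [lra|apply Rabs_pos].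
      - eapply Rle_trans. apply (pw3 _ _ _ (c * wt i * wt j)); auto; lra.
        assert (E1 : c * wt i * wt j * (Rabs (f i) * Rabs (g j - f j) + Rabs (g i - f i) * Rabs (g j - f j) +
                     Rabs (g i - f i) * Rabs (f j)) = c * x i * z j + c * z i * z j + c * z i * x j).
        { unfold x, z. ring. }
        rewrite E1. lra. }
    destruct (op_bound w A _ Hw1 Hwmono Hg') as [_ [_ HB]].
    unfold l1norm. rewrite (Series_ext _ (fun m => w (S m) * Rabs (Op A (S m)))).
    2:{ intro m. assert (E : Op A (S m) = Kop k s g (S m) - Kop k t f (S m)).
        { exact (Op_minus (fun i j => k i j s * g i * g j) (fun i j => k i j t * f i * f j) (S m)
                 (Rg (S m) ltac:(lia)) (Rf (S m) ltac:(lia))). }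
        rewrite E. reflexivity. }
    eapply Rle_lt_trans; [exact HB|].
    change (Series (fun i => z (S i)) < dl) in Hd.
    assert (HD : 0 <= Series (fun i => z (S i))) by (apply Series_nonneg; auto).
    assert (HSN : 0 <= Series (fun i => xn (S i))) by (apply Series_nonneg; [intro i; apply Hxn|exact ExN]).
    change (Series (fun i => xn (S i)) <= tau) in HxN.
    fold F.
    set (D := Series (fun i => z (S i))) in *.
    set (SN := Series (fun i => xn (S i))) in *.
    assert (HD1 : D <= 1) by lra. assert (HD2 : D <= dd) by lra.
    assert (Q1 : c * D * (2 * F + D) <= eps / 6).
    { assert (c * dd * (2 * F + 1) = eps / 6) by (unfold dd; field; lra).
      apply Rle_trans with (c * D * (2 * F + 1)).
      - apply Rmult_le_compat_l; [apply Rmult_le_pos|]; lra.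
      - rewrite <- H. apply Rmult_le_compat_r; [lra|]. apply Rmult_le_compat_l; lra. }
    assert (Q2 : eta * (F * F) <= eps / 6).
    { assert (eta * (F * F + 1) = eps / 6) by (unfold eta; field; nra). nra. }
    assert (Q3 : c * SN * F <= eps / 24).
    { assert (c * tau * (F + 1) = eps / 24) by (unfold tau; field; lra).
      apply Rle_trans with (c * tau * (F + 1)); [|lra].
      apply Rmult_le_compat; try lra. apply Rmult_le_pos; lra. apply Rmult_le_compat_l; lra. }
    nra.
  - intros t' Ht' r Hr. destruct (Hlater t' Ht') as [t2 [c [Ht2 [Ht2T [Hc Hkb]]]]].
    exists (3 * c * r). intros f g t Hf Hg Hfr Hgr Ht.
    assert (Htt : in_time T t) by (apply (in_time_of T t t2); [lra|auto]).
    destruct (P1 t f Htt Hf) as [Rf _]. destruct (P1 t g Htt Hg) as [Rg _].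
    set (x := fun i => wt i * Rabs (f i)). set (y := fun i => wt i * Rabs (g i)).
    set (z := fun i => wt i * Rabs (f i - g i)).
    assert (Hz0 : forall i, 0 <= z (S i)).
    { intro i. unfold z. assert (1 <= wt (S i)) by (apply Hwt1; lia). apply Rmult_le_pos; [lra|apply Rabs_pos]. }
    assert (Ez : ex_series (fun i => z (S i))).
    { apply (ex_series_le (K:=R_AbsRing) (V:=R_CompleteNormedModule) _ (fun i => x (S i) + y (S i))).
      - intro i. change (Rabs (z (S i)) <= x (S i) + y (S i)). rewrite Rabs_right by (apply Rle_ge, Hz0).
        unfold x, y, z. rewrite <- Rmult_plus_distr_l. apply Rmult_le_compat_l.
        assert (1 <= wt (S i)) by (apply Hwt1; lia). lra. apply Rabs_minus_le.
      - apply (ex_series_plus (K:=R_AbsRing) (V:=R_NormedModule)); [exact Hf|exact Hg]. }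
    set (A := fun i j => k i j t * f i * f j - k i j t * g i * g j).
    assert (Hg' : good (fun i j => w (i + j)%nat * Rabs (A i j))
       (3 / 2 * c * Series (fun i => x (S i)) * Series (fun i => z (S i)) +
        3 / 2 * c * Series (fun i => z (S i)) * Series (fun i => y (S i)))).
    { apply good_le with (Q := fun i j => c * x i * z j + c * z i * y j).
      2:{ apply good_add; apply good_prod; try lra; try (intro i; apply Hx0); try exact Hf; try exact Hg; auto. }
      intros i j Hi Hj. destruct (Hkb i j t Hi Hj) as [Hk0 Hk1]; [lra|].
      assert (1 <= w (i+j)%nat) by (apply Hw1; lia). split.
      - apply Rmult_le_pos; [lra|apply Rabs_pos].
      - eapply Rle_trans. apply (pw2 _ _ (c * wt i * wt j)); auto; lra.
        right. unfold x, y, z. ring. }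
    destruct (op_bound w A _ Hw1 Hwmono Hg') as [_ [_ HB]].
    unfold l1norm. rewrite (Series_ext _ (fun m => w (S m) * Rabs (Op A (S m)))).
    2:{ intro m. assert (E : Op A (S m) = Kop k t f (S m) - Kop k t g (S m)).
        { exact (Op_minus (fun i j => k i j t * f i * f j) (fun i j => k i j t * g i * g j) (S m)
                 (Rf (S m) ltac:(lia)) (Rg (S m) ltac:(lia))). }
        rewrite E. reflexivity. }
    eapply Rle_trans; [exact HB|].
    change (l1norm wt f <= r) in Hfr. change (l1norm wt g <= r) in Hgr.
    unfold l1norm in Hfr, Hgr.
    change (Series (fun i => x (S i)) <= r) in Hfr. change (Series (fun i => y (S i)) <= r) in Hgr.
    change (Series (fun m : nat => wt (S m) * Rabs (seq_sub f g (S m)))) with (Series (fun i => z (S i))).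
    assert (HD : 0 <= Series (fun i => z (S i))) by (apply Series_nonneg; auto).
    assert (0 <= Series (fun i => x (S i))) by (apply Series_nonneg; [intro i; apply Hx0|exact Hf]).
    assert (0 <= Series (fun i => y (S i))) by (apply Series_nonneg; [intro i; apply Hx0|exact Hg]).
    set (D := Series (fun i => z (S i))) in *.
    set (Sx := Series (fun i => x (S i))) in *. set (Sy := Series (fun i => y (S i))) in *.
    assert (c * D * Sx <= c * D * r) by (apply Rmult_le_compat_l; [apply Rmult_le_pos|]; lra).
    assert (c * D * Sy <= c * D * r) by (apply Rmult_le_compat_l; [apply Rmult_le_pos|]; lra).
    nra.
Qed.
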